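(* Let $C\subset\mathbb{R}$ be a Cantor set with Newhouse thickness $\tau(C)>1$, and let $\alpha>1$. For $\beta>0$ and $\mathbf{t}\in\mathbb{R}^2$ let $$\Delta^{(\beta)}_{\mathbf{t}}(C\times C)=\{\|\mathbf{c}-\mathbf{t}\|_\beta:\mathbf{c}\in C\times C\},\qquad \|(x,y)\|_\beta=(|x|^\beta+|y|^\beta)^{1/\beta}.$$ Then for every $\mathbf{t}\in\mathbb{R}^2$ the set $\Delta^{(\alpha)}_{\mathbf{t}}(C\times C)$ has non-empty interior. Moreover there exists a non-empty open interval $I$ centered at $\alpha$ such that $\big(\bigcap_{\beta\in I}\Delta^{(\beta)}_{\mathbf{t}}(C\times C)\big)^{\circ}\neq\emptyset$.
   Context: A Cantor set is a non-empty compact, perfect, totally disconnected subset of $\mathbb{R}$. Newhouse thickness: gaps of a Cantor set $K$ are the bounded connected components of $\mathbb{R}\setminus K$; for $u$ the right endpoint of a gap $G$, the bridge is $B(u)=(u,\ell(\widetilde G))$ where $\widetilde G$ is the first gap to the right of $u$ with $|\widetilde G|\ge|G|$ and $\ell(\widetilde G)$ its left endpoint (if none exists, the bridge extends to $\max K$), symmetrically at left endpoints; $\tau(K)=\inf_u|B(u)|/|G|$ over all gap endpoints $u$. *)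

(* Defs.v *)
From HB Require Import structures.
From mathcomp Require Import all_boot all_order all_algebra.
From mathcomp Require Import all_classical all_reals all_analysis.
Set Implicit Arguments. Unset Strict Implicit. Unset Printing Implicit Defensive.
Import Order.TTheory GRing.Theory Num.Theory numFieldNormedType.Exports.
Local Open Scope classical_set_scope.
Local Open Scope ring_scope.

Definition is_cantor_set {R : realType} (K : set R) : Prop :=
  [/\ K !=set0, compact K, perfect_set K & totally_disconnected K].

(* (a,b) is a gap of K: a bounded connected component of R \ K.  For a
   closed K these are exactly the open intervals (a,b), a < b, with both
   endpoints in K and no point of K strictly between them. *)
Definition is_gap {R : realType} (K : set R) (a b : R) : Prop :=
  [/\ a < b, K a, K b & forall x, a < x < b -> ~ K x].

(* Length of the bridge at the right endpoint b of the gap (a,b):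
   distance from b to the left endpoint of the first gap to the right of b of
   length >= b - a, or to max K (= sup K) if there is none. *)
Definition right_bridge {R : realType} (K : set R) (a b : R) : R :=
  inf ([set l - b | l in [set l | exists r, is_gap K l r /\ b <= l /\ b - a <= r - l]]
       `|` [set sup K - b]).

Definition left_bridge {R : realType} (K : set R) (a b : R) : R :=
  a - sup ([set r | exists l, is_gap K l r /\ r <= a /\ b - a <= r - l]
           `|` [set inf K]).

Definition thickness {R : realType} (K : set R) : R :=
  inf [set x | exists a b, is_gap K a b /\
         (x = right_bridge K a b / (b - a) \/ x = left_bridge K a b / (b - a))].

Definition beta_norm {R : realType} (beta : R) (v : R * R) : R :=
  ((`|v.1| `^ beta) + (`|v.2| `^ beta)) `^ (beta^-1).

Definition pinned_dist_set {R : realType} (beta : R) (C : set R) (t : R * R) : set R :=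
  [set beta_norm beta (c.1 - t.1, c.2 - t.2) | c in C `*` C].

(* Main.v *)
Require Import Defs.
From HB Require Import structures.
From mathcomp Require Import all_boot all_order all_algebra.
From mathcomp Require Import all_classical all_reals all_analysis.
Import Order.TTheory GRing.Theory Num.Theory numFieldNormedType.Exports.
Local Open Scope classical_set_scope.
Local Open Scope ring_scope.
From mathcomp Require Import lra zify ring.
Section Gaps.
Set Implicit Arguments. Unset Strict Implicit.
Variable R : realType.
Implicit Types (K : set R) (a b c d l r x y z w : R).

Lemma sup_in_closed (A : set R) : A !=set0 -> closed A -> has_ubound A -> A (sup A).
Proof.
move=> A0 cA hA; apply: (itv_closed_supremums A0 cA); split.
- exact: ub_le_sup.
- by move=> y uy; apply: ge_sup.
Qed.

Lemma inf_in_closed (A : set R) : A !=set0 -> closed A -> has_lbound A -> A (inf A).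
Proof.
move=> A0 cA hA; apply: (itv_closed_infimums A0 cA); split.
- exact: ge_inf.
- by move=> y uy; apply: lb_le_inf.
Qed.

Lemma gap_around K x y w : closed K -> K x -> K y -> x < w < y -> ~ K w ->
  exists a b, [/\ is_gap K a b, x <= a, a < w, w < b & b <= y].
Proof.
move=> cK Kx Ky /andP[xw wy] nKw.
pose A := K `&` [set z | x <= z] `&` [set z | z <= w].
pose B := K `&` [set z | w <= z] `&` [set z | z <= y].
have cA : closed A by apply: closedI; [apply: closedI => //; exact: closed_ge|exact: closed_le].
have cB : closed B by apply: closedI; [apply: closedI => //; exact: closed_ge|exact: closed_le].
have A0 : A !=set0 by exists x; split; [split=> //=|]; rewrite /= ?lexx ?ltW.
have B0 : B !=set0 by exists y; split; [split=> //=|]; rewrite /= ?lexx ?ltW.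
have hA : has_ubound A by exists w => z [].
have hB : has_lbound B by exists w => z [[]].
have As := sup_in_closed A0 cA hA.
have Bi := inf_in_closed B0 cB hB.
case: As => [[Ka xa] aw]; case: Bi => [[Kb wb] b_y].
have aw' : sup A < w by rewrite lt_neqAle aw andbT; apply/eqP => E; apply: nKw; rewrite -E.
have wb' : w < inf B by rewrite lt_neqAle wb andbT; apply/eqP => E; apply: nKw; rewrite E.
exists (sup A), (inf B); split => //.
split => //; first exact: lt_trans aw' wb'.
move=> z /andP[az zb] Kz.
have [zw|wz] := leP z w.
- have : z <= sup A.
    apply: sup_upper_bound => //; split; [split|] => //=.
    exact: (le_trans xa (ltW az)).
  by rewrite leNgt az.
- have : inf B <= z.
    apply: ge_inf => //; split; [split|] => //=; first exact: ltW.
    exact: (le_trans (ltW zb) b_y).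
  by rewrite leNgt zb.
Qed.

Lemma gap_disj K a b l r : is_gap K a b -> is_gap K l r -> a < l -> b <= l.
Proof.
move=> [ab Ka Kb nK] [lr Kl Kr _] al; rewrite leNgt; apply/negP => lb.
by apply: (nK l) => //; rewrite al lb.
Qed.

Lemma gap_eq K a b l r : is_gap K a b -> is_gap K l r ->
  `|a - l| < b - a -> `|a - l| < r - l -> a = l /\ b = r.
Proof.
move=> g1 g2 h1 h2.
have n1 := ler_norm (a - l); have n2 := ler_norm (- (a - l)); rewrite normrN in n2.
have al : a = l.
  have [al|la|//] := ltgtP a l.
  - have := gap_disj g1 g2 al; lra.
  - have := gap_disj g2 g1 la; lra.
subst l; split => //.
case: g1 g2 => [ab Ka Kb nK] [ar _ Kr nK'].
have [br|rb|//] := ltgtP b r.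
- by exfalso; apply: (nK' b) => //; rewrite ab br.
- by exfalso; apply: (nK r) => //; rewrite ar rb.
Qed.


Lemma dist_pos (A B : set R) : compact A -> compact B -> (forall x, A x -> B x -> False) ->
  exists2 e : R, 0 < e & forall x y, A x -> B y -> e <= `|x - y|.
Proof.
move=> cA cB dis.
pose D := [set z.1 - z.2 | z in A `*` B].
have cD : compact D.
  apply: continuous_compact; last exact: compact_setX.
  apply: continuous_subspaceT => z.
  apply: (@continuousB _ _ _ (fun z : R * R => z.1) (fun z : R * R => z.2)); [exact: cvg_fst | exact: cvg_snd].
have clD := compact_closed (@Rhausdorff R) cD.
have D0 : ~ D 0.
  case=> z [Az Bz] /eqP; rewrite subr_eq0 => /eqP e.
  by apply: (dis z.1) => //; rewrite e.
have nD : nbhs (0:R) (~` D) by apply: open_nbhs_nbhs; split => //; rewrite openC.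
move/nbhs_ballP: nD => [e /= e0 He]; exists e => // x y Ax By.
rewrite leNgt; apply/negP => h; apply: (He (x - y)).
  by rewrite /ball /= sub0r normrN.
by exists (x, y).
Qed.

Definition sep K (p q tau : R) : Prop :=
  [/\ (forall z, K z -> p <= z <= q),
      (forall a b l r x, is_gap K a b -> is_gap K l r -> b <= l -> x <= b - a -> x <= r - l ->
          tau * x <= l - b),
      (forall a b, is_gap K a b -> tau * (b - a) <= a - p) &
      (forall a b, is_gap K a b -> tau * (b - a) <= q - b)].

Definition stg (A B : set R) (u v : R * R) :=
  [/\ is_gap A u.1 u.2, is_gap B v.1 v.2 & [&& u.1 < v.1, v.1 < u.2 & u.2 < v.2]].

Definition lsum (u v : R * R) := (u.2 - u.1) + (v.2 - v.1).

Lemma step (A B : set R) pA qA pB qB tA tB u v :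
  closed A -> closed B -> sep A pA qA tA -> sep B pB qB tB -> A qA -> B pB ->
  0 < tA -> 0 < tB -> 1 <= tA * tB -> (forall x, A x -> B x -> False) ->
  stg A B u v -> exists u' v', stg B A u' v' /\ lsum u' v' < lsum u v.
Proof.
move=> cA cB [sA1 sA2 sA3 sA4] [sB1 sB2 sB3 sB4] AqA BpB tA0 tB0 t1 dis.
case: u v => [a b] [c d] [/= gab gcd /and3P[ac cb bd]].
have [ab Aa Ab _] := gab; have [cd Bc Bd _] := gcd.
have R1 : (exists l r, [/\ is_gap A l r, b <= l, l < d, d < r & r - l < b - a])
          \/ tA * (b - a) < d - c.
  have [dq|qd] := ltP d qA.
  - have nAd : ~ A d := fun h => dis d h Bd.
    have [l [r [glr bl ld dr rq]]] := gap_around cA Ab AqA (introT andP (conj bd dq)) nAd.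
    have [h|h] := ltP (r - l) (b - a); first by left; exists l, r.
    right; have := sA2 a b l r (b - a) gab glr bl (lexx _) h; lra.
  - right; have := sA4 a b gab; lra.
have L1 : (exists l r, [/\ is_gap B l r, l < a, a < r, r <= c & r - l < d - c])
          \/ tB * (d - c) < b - a.
  have [pa|ap] := ltP pB a.
  - have nBa : ~ B a := fun h => dis a Aa h.
    have [l [r [glr pl la ar rc]]] := gap_around cB BpB Bc (introT andP (conj pa ac)) nBa.
    have [h|h] := ltP (r - l) (d - c); first by left; exists l, r.
    right; have := sB2 l r c d (d - c) glr gcd rc h (lexx _); lra.
  - right; have := sB3 c d gcd; lra.
case: R1 => [[l [r [glr bl ld dr h]]]|R1].
  exists (c, d), (l, r); split; last by rewrite /lsum /=; lra.
  split => //=; apply/and3P; split; lra.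
case: L1 => [[l [r [glr la ar rc h]]]|L1].
  exists (l, r), (a, b); split; last by rewrite /lsum /=; lra.
  split => //=; apply/and3P; split; lra.
exfalso; nra.
Qed.

Lemma trunc_close (lo e x x' : R) : 0 < e -> lo <= x -> lo <= x' ->
  Num.trunc ((x - lo) / e) = Num.trunc ((x' - lo) / e) -> `|x - x'| < e.
Proof.
move=> e0 lx lx' E.
have y0 : 0 <= (x - lo) / e by apply: divr_ge0; rewrite ?subr_ge0 // ltW.
have y0' : 0 <= (x' - lo) / e by apply: divr_ge0; rewrite ?subr_ge0 // ltW.
have := truncn_itv y0; have := truncn_itv y0'; rewrite E -!natr1.
set k := (Num.trunc _)%:R; set u := (x - lo) / e; set u' := (x' - lo) / e.
move=> /andP[k1 k2] /andP[k3 k4].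
have : `|u - u'| < 1 by rewrite ltr_norml; apply/andP; split; lra.
have -> : u - u' = (x - x') / e by rewrite /u /u' -mulrBl; congr (_ * _); lra.
have ie : 0 < e^-1 by rewrite invr_gt0.
by rewrite normrM (gtr0_norm ie) ltr_pdivrMr // mul1r.
Qed.

Lemma gap_lemma K1 K2 p1 q1 p2 q2 t1 t2 :
  compact K1 -> compact K2 -> sep K1 p1 q1 t1 -> sep K2 p2 q2 t2 ->
  K1 p1 -> K1 q1 -> K2 p2 -> K2 q2 -> 0 < t1 -> 0 < t2 -> 1 <= t1 * t2 ->
  p1 < p2 -> p2 < q1 -> q1 < q2 -> exists x, K1 x /\ K2 x.
Proof.
move=> cK1 cK2 s1 s2 K1p K1q K2p K2q t10 t20 tt h1 h2 h3.
case: (pselect (exists x, K1 x /\ K2 x)) => // nI; exfalso.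
have dis : forall x, K1 x -> K2 x -> False := fun x (k1 : K1 x) (k2 : K2 x) => nI (ex_intro _ x (conj k1 k2)).
have dis' : forall x, K2 x -> K1 x -> False := fun x (k2 : K2 x) (k1 : K1 x) => dis x k1 k2.
have cl1 := compact_closed (@Rhausdorff R) cK1.
have cl2 := compact_closed (@Rhausdorff R) cK2.
have [e e0 He] := dist_pos cK1 cK2 dis.
have [a [b [gab p1a ap2 p2b bq1]]] :=
  gap_around cl1 K1p K1q (introT andP (conj h1 h2)) (dis' _ K2p).
have [_ _ K1b _] := gab.
have [c [d [gcd p2c cb bd dq2]]] :=
  gap_around cl2 K2p K2q (introT andP (conj p2b (le_lt_trans bq1 h3))) (dis _ K1b).
have init : stg K1 K2 (a, b) (c, d).
  by split => //=; apply/and3P; split; lra.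
pose ST (s : bool * (R * R) * (R * R)) :=
  if s.1.1 then stg K2 K1 s.1.2 s.2 else stg K1 K2 s.1.2 s.2.
pose LS (s : bool * (R * R) * (R * R)) := lsum s.1.2 s.2.
have stepST : forall s, ST s -> exists s', ST s' /\ LS s' < LS s.
  case=> [[fl u] v]; rewrite /ST /LS /=; case: fl => H.
  - have tt' : 1 <= t2 * t1 by rewrite mulrC.
    have [u' [v' [H1 H2]]] := step cl2 cl1 s2 s1 K2q K1p t20 t10 tt' dis' H.
    by exists (false, u', v').
  - have [u' [v' [H1 H2]]] := step cl1 cl2 s1 s2 K1q K2p t10 t20 tt dis H.
    by exists (true, u', v').
have chain : forall n, exists g : nat -> bool * (R * R) * (R * R),
    (forall i, (i <= n)%N -> ST (g i)) /\
    (forall i j, (i < j <= n)%N -> LS (g j) < LS (g i)).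
  elim => [|n [g [Hg Hlt]]].
  - exists (fun _ => (false, (a, b), (c, d))); split => // i j /andP[ij].
    by rewrite leqn0 => /eqP j0; rewrite j0 in ij.
  - have [s' [Ss' Ls']] := stepST (g n) (Hg n (leqnn n)).
    exists (fun i => if i == n.+1 then s' else g i); split.
    + move=> i; case: eqP => [_ _ //| /eqP ni le]; apply: Hg.
      by rewrite -ltnS ltn_neqAle ni le.
    + move=> i j /andP[ij jn]; have iN : (i < n.+1)%N := leq_trans ij jn.
      rewrite (ltn_eqF iN); case: (eqVneq j n.+1) => [jE|jn'].
      * move: iN; rewrite ltnS leq_eqVlt => /orP[/eqP->//|iN'].
        by apply: (lt_trans Ls'); apply: Hlt; rewrite iN' leqnn.
      * apply: Hlt; rewrite ij /=.
        by rewrite -ltnS ltn_neqAle jn' jn.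
pose lo := Num.min p1 p2; pose hi := Num.max q1 q2.
have [s11 _ _ _] := s1; have [s21 _ _ _] := s2.
pose N := Num.trunc ((hi - lo) / e).
pose code (x : R) : 'I_N.+1 := inord (Num.trunc ((x - lo) / e)).
have inr : forall x, K1 x \/ K2 x -> lo <= x <= hi.
  move=> x [/s11|/s21] /andP[? ?]; rewrite /lo /hi ge_min le_max; apply/andP; split;
    apply/orP; by [left|right].
have leN : forall z, lo <= z <= hi -> (Num.trunc ((z - lo) / e) < N.+1)%N.
  move=> z /andP[lz zh]; rewrite ltnS; apply: le_truncn.
  by apply: ler_wpM2r; [rewrite invr_ge0 ltW | rewrite lerD2r].
have code_eq : forall x x', lo <= x <= hi -> lo <= x' <= hi -> code x = code x' ->
    `|x - x'| < e.
  move=> x x' hx hx' /(congr1 val); rewrite /code /= !inordK ?(leN _ hx) ?(leN _ hx') //.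
  by apply: trunc_close => //; [case/andP: hx | case/andP: hx'].
have key : forall (A B : set R) u v u' v',
    (A = K1 /\ B = K2) \/ (A = K2 /\ B = K1) ->
    stg A B u v -> stg A B u' v' -> code u.1 = code u'.1 -> code v.1 = code v'.1 ->
    lsum u v = lsum u' v'.
  move=> A B [a1 b1] [c1 d1] [a2 b2] [c2 d2] AB [/= g1 g2 /and3P[x1 x2 x3]]
    [/= g3 g4 /and3P[y1 y2 y3]] E1 E2.
  have [inA [inB sepe]] : (forall x, A x -> lo <= x <= hi) /\
      (forall x, B x -> lo <= x <= hi) /\ (forall x y, A x -> B y -> e <= `|x - y|).
    case: AB => [][-> ->]; (split; [|split]).
    - by move=> x hx; apply: inr; left.
    - by move=> x hx; apply: inr; right.
    - exact: He.
    - by move=> x hx; apply: inr; right.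
    - by move=> x hx; apply: inr; left.
    - by move=> x y hx hy; rewrite distrC; apply: He.
  have [_ Aa1 Ab1 _] := g1; have [_ Ba1 Bb1 _] := g2.
  have [_ Aa2 Ab2 _] := g3; have [_ Ba2 Bb2 _] := g4.
  have e1 := sepe _ _ Ab1 Ba1; have e2 := sepe _ _ Ab2 Ba2.
  rewrite gtr0_norm in e1; last lra.
  rewrite gtr0_norm in e2; last lra.
  have dd1 := code_eq _ _ (inA _ Aa1) (inA _ Aa2) E1.
  have dd2 := code_eq _ _ (inB _ Ba1) (inB _ Ba2) E2.
  have [-> ->] := gap_eq g1 g3 ltac:(lra) ltac:(lra).
  by have [-> ->] := gap_eq g2 g4 ltac:(lra) ltac:(lra).
pose M := (2 * N.+1 * N.+1)%N.
have [g [Hg Hlt]] := chain M.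
pose f (i : 'I_M.+1) : bool * 'I_N.+1 * 'I_N.+1 :=
  ((g i).1.1, code (g i).1.2.1, code (g i).2.1).
have finj : injective f.
  move=> i j /= E.
  have Ei : ST (g i) by apply: Hg; rewrite -ltnS.
  have Ej : ST (g j) by apply: Hg; rewrite -ltnS.
  move: E; rewrite /f => -[F1 F2 F3].
  have EL : LS (g i) = LS (g j).
    move: Ei Ej; rewrite /ST /LS F1; case: (g j).1.1 => Ei Ej.
    - by apply: (key K2 K1) => //; right.
    - by apply: (key K1 K2) => //; left.
  apply/val_inj => /=; case: (ltngtP i j) => // ij.
  - have := Hlt i j; rewrite ij -ltnS ltn_ord => /(_ erefl).
    by rewrite EL ltxx.
  - have := Hlt j i; rewrite ij -ltnS ltn_ord => /(_ erefl).
    by rewrite EL ltxx.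
have := leq_card _ finj; rewrite !card_prod card_bool !card_ord.
by rewrite /M ltnn.
Qed.
End Gaps.


Section Transfer.
Set Implicit Arguments. Unset Strict Implicit.
Variable R : realType.
Implicit Types (K : set R) (a b c d l r x y z w : R).

Lemma gap_img K p q (phi : R -> R) c d :
  (forall z, K z -> p <= z <= q) ->
  (forall u v, p <= u -> u < v -> v <= q -> phi u < phi v) ->
  is_gap (phi @` K) c d -> exists a b, [/\ is_gap K a b, c = phi a & d = phi b].
Proof.
move=> Kpq mono [cd [a Ka ea] [b Kb eb] nK].
have [ap aq] := andP (Kpq a Ka); have [bp bq] := andP (Kpq b Kb).
have ab : a < b.
  rewrite ltNge; apply/negP => ba; move: cd; rewrite -ea -eb.
  case: (ltgtP b a) => [h|h|->]; last by rewrite ltxx.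
  - by move/(lt_trans (mono _ _ bp h aq)); rewrite ltxx.
  - by move: ba; rewrite leNgt h.
exists a, b; split => //; split => // w /andP[aw wb] Kw.
apply: (nK (phi w)); last by exists w.
rewrite -ea -eb; apply/andP; split; apply: mono => //.
- exact: (le_trans (ltW wb) bq).
- exact: (le_trans ap (ltW aw)).
Qed.

Lemma sep_inc K p q tau (phi : R -> R) m M :
  sep K p q tau -> 0 < tau -> 0 < m -> m <= M ->
  (forall u v, p <= u -> u < v -> v <= q ->
     m * (v - u) <= phi v - phi u /\ phi v - phi u <= M * (v - u)) ->
  sep (phi @` K) (phi p) (phi q) (tau * m / M).
Proof.
move=> [s1 s2 s3 s4] tau0 m0 mM H.
have M0 : 0 < M := lt_le_trans m0 mM.
have mono : forall u v, p <= u -> u < v -> v <= q -> phi u < phi v.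
  move=> u v pu uv vq; have [h _] := H u v pu uv vq.
  rewrite -subr_gt0; apply: lt_le_trans h; apply: mulr_gt0 => //; by rewrite subr_gt0.
have monole : forall u v, p <= u -> u <= v -> v <= q -> phi u <= phi v.
  move=> u v pu uv vq; have [h|h|e] := ltgtP u v.
  - exact/ltW/mono.
  - by move: uv; rewrite leNgt h.
  - by rewrite e.
have lip : forall u v, p <= u -> u <= v -> v <= q ->
    m * (v - u) <= phi v - phi u /\ phi v - phi u <= M * (v - u).
  move=> u v pu uv vq; have [h|h|e] := ltgtP u v.
  - exact: H.
  - by move: uv; rewrite leNgt h.
  - by rewrite e !subrr !mulr0.
have gi := gap_img s1 mono.
split.
- move=> _ [w Kw <-]; have [pw wq] := andP (s1 w Kw).
  rewrite !monole //; exact: le_trans pw wq.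
- move=> c d c' d' x /gi [a [b [gab -> ->]]] /gi [l [r [glr -> ->]]] dc xd xd'.
  have [ab Ka Kb _] := gab; have [lr Kl Kr _] := glr.
  have [pa aq] := andP (s1 a Ka); have [pb bq] := andP (s1 b Kb).
  have [pl lq] := andP (s1 l Kl); have [pr rq] := andP (s1 r Kr).
  have bl : b <= l.
    rewrite leNgt; apply/negP => lb; have := mono l b pl lb bq; rewrite ltNge dc //.
  have [_ L1] := lip a b pa (ltW ab) bq; have [_ L2] := lip l r pl (ltW lr) rq.
  have [L3 _] := lip b l pb bl lq.
  have y1 : x / M <= b - a by rewrite ler_pdivrMr // mulrC; apply: le_trans L1.
  have y2 : x / M <= r - l by rewrite ler_pdivrMr // mulrC; apply: le_trans L2.
  have := s2 a b l r (x / M) gab glr bl y1 y2.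
  have -> : tau * m / M * x = m * (tau * (x / M)) by ring.
  move=> h; apply: (le_trans _ L3); by rewrite ler_pM2l.
- move=> c d /gi [a [b [gab -> ->]]].
  have [ab Ka Kb _] := gab; have [pa aq] := andP (s1 a Ka); have [pb bq] := andP (s1 b Kb).
  have [_ L1] := lip a b pa (ltW ab) bq; have [L3 _] := lip p a (lexx p) pa aq.
  have := s3 a b gab => h; apply: (le_trans _ L3).
  have -> : tau * m / M * (phi b - phi a) = m * (tau * ((phi b - phi a) / M)).
    by ring.
  rewrite ler_pM2l //; apply: (le_trans _ h); rewrite ler_pM2l //.
  by rewrite ler_pdivrMr // mulrC.
- move=> c d /gi [a [b [gab -> ->]]].
  have [ab Ka Kb _] := gab; have [pa aq] := andP (s1 a Ka); have [pb bq] := andP (s1 b Kb).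
  have [_ L1] := lip a b pa (ltW ab) bq; have [L3 _] := lip b q pb bq (lexx q).
  have := s4 a b gab => h; apply: (le_trans _ L3).
  have -> : tau * m / M * (phi b - phi a) = m * (tau * ((phi b - phi a) / M)).
    by ring.
  rewrite ler_pM2l //; apply: (le_trans _ h); rewrite ler_pM2l //.
  by rewrite ler_pdivrMr // mulrC.
Qed.

Lemma sep_neg K p q tau : sep K p q tau -> sep ((fun z => - z) @` K) (- q) (- p) tau.
Proof.
move=> [s1 s2 s3 s4].
have gn : forall c d, is_gap ((fun z => - z) @` K) c d -> is_gap K (- d) (- c).
  move=> c d [cd [a Ka ea] [b Kb eb] nK]; split.
  - by rewrite ltrN2.
  - by rewrite -eb opprK.
  - by rewrite -ea opprK.
  - move=> w /andP[h1 h2] Kw; apply: (nK (- w)); last by exists w.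
    by rewrite -(opprK c) -(opprK d) !ltrN2 h1 h2.
split.
- move=> _ [w Kw <-]; have /andP[h1 h2] := s1 w Kw; apply/andP; split; lra.
- move=> c d c' d' x /gn g1 /gn g2 dc xd xd'.
  have := s2 (- d') (- c') (- d) (- c) x g2 g1.
  have -> : - c - - d = d - c by ring.
  have -> : - c' - - d' = d' - c' by ring.
  move=> h; have := h ltac:(lra) xd' xd; lra.
- move=> c d /gn g; have := s4 _ _ g.
  have -> : - c - - d = d - c by ring.
  lra.
- move=> c d /gn g; have := s3 _ _ g.
  have -> : - c - - d = d - c by ring.
  lra.
Qed.

End Transfer.


Section Thick.
Set Implicit Arguments. Unset Strict Implicit.
Variable R : realType.
Implicit Types (K C : set R) (a b c d l r x y z w : R).

Lemma compact_bnd C : compact C -> exists M, forall x, C x -> `|x| < M.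
Proof.
move=> /compact_bounded /ex_strict_bound_gt0 [M _ HM]; exists M => x Cx; exact: HM.
Qed.

Lemma thick_sep C : is_cantor_set C -> 0 < thickness C ->
  forall a b l r x, is_gap C a b -> is_gap C l r -> b <= l -> x <= b - a -> x <= r - l ->
  thickness C * x <= l - b.
Proof.
move=> [C0 cC _ _] t0.
have [M HM] := compact_bnd cC.
have hub : has_ubound C.
  exists M => x Cx; have := HM x Cx; have := ler_norm x; lra.
have hlb : has_lbound C.
  exists (- M) => x Cx; have := HM x Cx; have := ler_norm (- x); rewrite normrN; lra.
have hsC : has_sup C by split.
have RB0 : forall a b, is_gap C a b -> 0 <= right_bridge C a b.
  move=> a b [ab Ca Cb _]; apply: lb_le_inf.
    by exists (sup C - b); right.
  move=> y [[l0 [r0 [_ [bl _]]] <-]|->]; first by rewrite subr_ge0.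
  by rewrite subr_ge0; apply: sup_upper_bound.
have RBle : forall a b l r, is_gap C a b -> is_gap C l r -> b <= l -> b - a <= r - l ->
    right_bridge C a b <= l - b.
  move=> a b l r gab glr bl h; apply: ge_inf.
    exists 0 => y [[l0 [r0 [_ [bl' _]]] <-]|->]; first by rewrite subr_ge0.
    by have [_ _ Cb _] := gab; rewrite subr_ge0; apply: sup_upper_bound.
  by left; exists l => //; exists r.
have LBset : forall l r, is_gap C l r -> has_sup
    ([set r0 | exists l0, is_gap C l0 r0 /\ r0 <= l /\ r - l <= r0 - l0] `|` [set inf C]).
  move=> l r [_ Cl _ _]; split; first by exists (inf C); right.
  exists l => y [[l0 [_ [yl _]]]//|->].
  by apply: ge_inf => //; exists (- M) => x Cx; have := HM x Cx; have := ler_norm (- x); rewrite normrN; lra.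
have LB0 : forall l r, is_gap C l r -> 0 <= left_bridge C l r.
  move=> l r glr; have [_ Cl _ _] := glr; rewrite subr_ge0; apply: ge_sup.
    by exists (inf C); right.
  move=> y [[l0 [_ [yl _]]]//|->].
  by apply: ge_inf.
have LBle : forall a b l r, is_gap C a b -> is_gap C l r -> b <= l -> r - l <= b - a ->
    left_bridge C l r <= l - b.
  move=> a b l r gab glr bl h; rewrite /left_bridge lerD2l lerN2.
  by apply: sup_upper_bound; [exact: LBset | left; exists a].
have Tlb : forall y, [set x | exists a b, is_gap C a b /\
         (x = right_bridge C a b / (b - a) \/ x = left_bridge C a b / (b - a))] y -> 0 <= y.
  move=> y [a [b [gab [->|->]]]]; have [ab _ _ _] := gab.
  - by apply: divr_ge0; [apply: RB0 | rewrite subr_ge0 ltW].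
  - by apply: divr_ge0; [apply: LB0 | rewrite subr_ge0 ltW].
have tle : forall a b, is_gap C a b ->
    thickness C * (b - a) <= right_bridge C a b /\ thickness C * (b - a) <= left_bridge C a b.
  move=> a b gab; have [ab _ _ _] := gab; have ba : 0 < b - a by rewrite subr_gt0.
  split; rewrite -ler_pdivlMr //.
  - by apply: ge_inf; [exists 0; exact: Tlb | exists a, b; split => //; left].
  - by apply: ge_inf; [exists 0; exact: Tlb | exists a, b; split => //; right].
move=> a b l r x gab glr bl xa xr.
have [ab _ _ _] := gab; have [lr _ _ _] := glr.
have [h|h] := leP (b - a) (r - l).
- have := RBle a b l r gab glr bl h; have [h1 _] := tle a b gab.
  have : thickness C * x <= thickness C * (b - a) by rewrite ler_pM2l.
  lra.
- have := LBle a b l r gab glr bl (ltW h); have [_ h1] := tle l r glr.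
  have : thickness C * x <= thickness C * (r - l) by rewrite ler_pM2l.
  lra.
Qed.

End Thick.


Section Window.
Set Implicit Arguments. Unset Strict Implicit.
Variable R : realType.
Implicit Types (K C : set R) (a b c d l r x y z w : R).

Lemma near_pt C z e : is_cantor_set C -> C z -> 0 < e ->
  exists y, [/\ y != z, C y & `|z - y| < e].
Proof.
move=> [_ _ [_ pC] _] Cz e0.
have : limit_point C z by rewrite pC.
move/(_ _ (nbhsx_ballx z e e0)) => [y [yz Cy bz]].
by exists y; split.
Qed.

Lemma between_gap C u v : is_cantor_set C -> C u -> C v -> u < v ->
  exists a b, [/\ is_gap C a b, u <= a & b <= v].
Proof.
move=> cC Cu Cv uv; have [_ cpC _ tdC] := cC.
have clC := compact_closed (@Rhausdorff R) cpC.
case: (pselect (exists w, u < w < v /\ ~ C w)) => [[w [uwv nCw]]|H].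
  have [a [b [gab ua _ _ bv]]] := gap_around clC Cu Cv uwv nCw.
  by exists a, b.
exfalso.
have sub : [set x | u <= x <= v] `<=` C.
  move=> x /= /andP[ux xv].
  have [->//|xu] := eqVneq x u; have [->//|xv'] := eqVneq x v.
  case: (pselect (C x)) => // nCx; exfalso; apply: H; exists x; split => //.
  by rewrite !lt_neqAle ux xv eq_sym xu xv'.
have : connected_component C u v.
  exists [set x | u <= x <= v]; last by rewrite /= (ltW uv) lexx.
  split => //; first by rewrite /= lexx (ltW uv).
  apply/connected_intervalP => x y /andP[ux _] /andP[_ yv] z' /andP[xz zy].
  by rewrite /= (le_trans ux xz) (le_trans zy yv).
rewrite tdC // => vu; move: uv; rewrite vu ltxx //.
Qed.

Lemma window C (t rho : R) : is_cantor_set C -> 1 < thickness C -> 1 < rho ->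
  exists K p q t', [/\ compact K, sep K p q (thickness C), K p, K q & p < q] /\
   [/\ t' < p, q - t' <= rho * (p - t') &
       forall x, K x -> exists c, C c /\ `|c - t| = x - t'].
Proof.
move=> cC t1 r1.
have t0 : 0 < thickness C by lra.
have SC := thick_sep cC t0.
set tau := thickness C in t0 t1 SC *.
have [C0 cpC _ _] := cC.
have clC := compact_closed (@Rhausdorff R) cpC.
have [z [Cz zt]] : exists z, C z /\ z != t.
  have [c0 Cc0] := C0; have [ct|ct] := eqVneq c0 t; last by exists c0.
  have [y [yt Cy _]] := near_pt cC Cc0 ltr01; by exists y; rewrite -ct.
pose d := `|z - t|.
have d0 : 0 < d by rewrite normr_gt0 subr_eq0.
pose k2 := (rho - 1) / (rho + 1).
have k20 : 0 < k2 by apply: divr_gt0; lra.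
have k21 : k2 < 1 by rewrite ltr_pdivrMr; lra.
have keq : 1 + k2 = rho * (1 - k2).
  rewrite /k2; field; lra.
pose e2 := k2 * d.
have e20 : 0 < e2 by apply: mulr_gt0.
have e2d : e2 < d by rewrite /e2 -ltr_pdivlMr // divff ?gt_eqF //.
have e2h : 0 < e2 / 2 by apply: divr_gt0.
have [y [yz Cy zy]] := near_pt cC Cz e2h.
have [a [b [gab hab]]] : exists a b, is_gap C a b /\ (z - e2 / 2 < a /\ b < z + e2 / 2).
  have nz1 := ler_norm (z - y); have nz2 := ler_norm (- (z - y)); rewrite normrN in nz2.
  have [zy'|yz'] := ltP z y.
  - have [a [b [gab ua bv]]] := between_gap cC Cz Cy zy'.
    exists a, b; split => //; split; lra.
  - have yz'' : y < z by rewrite lt_neqAle yz yz'.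
    have [a [b [gab ua bv]]] := between_gap cC Cy Cz yz''.
    exists a, b; split => //; split; lra.
have [ab Ca Cb nCab] := gab.
have mh : 0 < Num.min (e2 / 2) (b - a).
  by rewrite lt_min; apply/andP; split; [apply: divr_gt0 | rewrite subr_gt0].
have [c [cb Cc bc]] := near_pt cC Cb mh.
move: bc; rewrite lt_min => /andP[bc1 bc2].
have nb1 := ler_norm (b - c); have nb2 := ler_norm (- (b - c)); rewrite normrN in nb2.
have b_c : b < c.
  rewrite ltNge; apply/negP => cb'; have cb'' : c < b by rewrite lt_neqAle cb cb'.
  by apply: (nCab c) => //; apply/andP; split; lra.
have [l0 [r0 [g0 bl0 r0c]]] := between_gap cC Cb Cc b_c.
have [l0r0 Cl0 Cr0 _] := g0.
pose lam := Num.min (b - a) (r0 - l0).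
have lam0 : 0 < lam by rewrite lt_min !subr_gt0 ab l0r0.
have lamba : lam <= b - a by rewrite ge_min lexx.
have lamr : lam <= r0 - l0 by rewrite ge_min lexx orbT.
pose S := [set l | exists r, is_gap C l r /\ b <= l /\ lam <= r - l].
have Sl0 : S l0 by exists r0.
have hS : has_lbound S by exists b => l [r [_ [bl _]]].
have [q Sq qlt] := inf_adherent lam0 (conj (ex_intro _ l0 Sl0) hS).
have qmin : forall l, S l -> q <= l.
  move=> l Sl; rewrite leNgt; apply/negP => lq.
  have [r [glr [bl lr]]] := Sl; have [rq [gq [bq lq']]] := Sq.
  have := gap_disj glr gq lq; have := ge_inf hS Sl; lra.
have [rq [gq [bq lamq]]] := Sq.
have [qrq Cq Crq _] := gq.
have b_q : b < q.
  rewrite lt_neqAle bq andbT; apply/eqP => eq; subst q.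
  have := SC a b b rq lam gab gq (lexx _) lamba lamq; have : 0 < tau * lam by apply: mulr_gt0.
  rewrite subrr; lra.
have ql0 : q <= l0 := qmin l0 Sl0.
pose K := C `&` [set x | b <= x <= q].
have cK : compact K.
  apply: (subclosed_compact _ cpC); last by move=> x [].
  by apply: closedI => //; rewrite (_ : [set x | b <= x <= q] = [set x | b <= x] `&` [set x | x <= q]);
    [apply: closedI; [exact: closed_ge| exact: closed_le] | apply/seteqP; split => x /=; [move/andP|case=> -> ->]].
have gK : forall l r, is_gap K l r -> [/\ is_gap C l r, b <= l & r <= q].
  move=> l r [lr [Cl /andP[bl lq]] [Cr /andP[br rq']] nK]; split => //.
  split => // w /andP[lw wr] Cw; apply: (nK w); first by rewrite lw wr.
  by split => //; apply/andP; split; lra.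
have sK : sep K b q tau.
  split.
  - by move=> x [].
  - move=> a' b' l r x /gK [g1 _ _] /gK [g2 _ _]; exact: SC.
  - move=> l r /gK [glr bl rq'].
    have [lr _ _ _] := glr.
    have rl : r - l < lam.
      rewrite ltNge; apply/negP => h.
      have := qmin l (ex_intro _ r (conj glr (conj bl h))); lra.
    by apply: SC gab glr bl _ (lexx _); lra.
  - move=> l r /gK [glr bl rq'].
    have [lr _ _ _] := glr.
    have rl : r - l < lam.
      rewrite ltNge; apply/negP => h.
      have := qmin l (ex_intro _ r (conj glr (conj bl h))); lra.
    by apply: SC glr gq rq' (lexx _) _; lra.
have Kb : K b by split => //; rewrite /= lexx ltW.
have Kq : K q by split => //; rewrite /= lexx ltW.
have nzt1 := ler_norm (z - t); have nzt2 := ler_norm (- (z - t)); rewrite normrN in nzt2.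
have de2 : rho * ((1 - k2) * d) = d + e2 by rewrite mulrA -keq /e2; ring.
have [tz|zt'] := ltP t z.
- have dE : d = z - t by rewrite /d gtr0_norm // subr_gt0.
  exists K, b, q, t; split => //; split.
  + lra.
  + have : rho * ((1 - k2) * d) <= rho * (b - t).
      rewrite ler_pM2l; last lra.
      have : (1 - k2) * d = d - e2 by rewrite /e2; ring.
      lra.
    lra.
  + move=> x [Cx /andP[bx xq]]; exists x; split => //; rewrite gtr0_norm //; lra.
- have zt'' : z < t by rewrite lt_neqAle zt zt'.
  have dE : d = t - z by rewrite /d ltr0_norm ?subr_lt0 // opprB.
  exists ((fun x => - x) @` K), (- q), (- b), (- t); split.
  + split.
    * apply: continuous_compact => //; apply: continuous_subspaceT => x.
      exact: opp_continuous.
    * exact: sep_neg.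
    * by exists q.
    * by exists b.
    * by rewrite ltrN2.
  + split.
    * lra.
    * have : rho * ((1 - k2) * d) <= rho * (t - q).
        rewrite ler_pM2l; last lra.
        have : (1 - k2) * d = d - e2 by rewrite /e2; ring.
        lra.
      lra.
    * move=> _ [x [Cx /andP[bx xq]] <-]; exists x; split => //.
      rewrite ltr0_norm; lra.
Qed.

End Window.


Section Analysis.
Set Implicit Arguments. Unset Strict Implicit.
Variable R : realType.

Lemma powRr_cont (c : R) : 0 < c -> continuous (fun b : R => c `^ b).
Proof.
move=> c0.
have -> : (fun b : R => c `^ b) = expR \o (fun b => b * ln c).
  by apply: funext => b; rewrite /powR gt_eqF.
move=> x; apply: continuous_comp; first exact: mulrr_continuous.
exact: continuous_expR.
Qed.

Lemma cont_pos (h : R -> R) a : continuous h -> 0 < h a ->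
  exists2 d, 0 < d & forall b, `|a - b| < d -> 0 < h b.
Proof.
move=> ch ha.
have := @cvgr_gt _ _ _ _ h (h a) (ch a) 0 ha.
move=> H.
have : nbhs a (fun x => 0 < h x) by exact: H.
move=> /nbhs_ballP [d /= d0 Hd]; exists d => // b hb; exact: Hd.
Qed.

Lemma pow_lip (p q beta : R) : 0 < p -> 1 <= beta -> forall u v, p <= u -> u < v -> v <= q ->
  beta * p `^ (beta - 1) * (v - u) <= v `^ beta - u `^ beta /\
  v `^ beta - u `^ beta <= beta * q `^ (beta - 1) * (v - u).
Proof.
move=> p0 b1 u v pu uv vq.
have u0 : 0 < u := lt_le_trans p0 pu.
have [c cuv ->] : exists2 c, c \in `]u, v[ & v `^ beta - u `^ beta = beta * c `^ (beta - 1) * (v - u).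
  apply: (@MVT _ (fun x => x `^ beta) (fun x => beta * x `^ (beta - 1))) => //.
  - move=> x; rewrite in_itv /= => /andP[ux _]; apply: is_derive1_powR.
    exact: lt_trans u0 ux.
  - apply: derivable_within_continuous => x; rewrite in_itv /= => /andP[ux _].
    apply: derivable_powR; rewrite in_itv /= andbT; exact: lt_le_trans u0 ux.
move: cuv; rewrite in_itv /= => /andP[uc cv].
have b0 : 0 <= beta - 1 by rewrite subr_ge0.
have vu : 0 <= v - u by rewrite subr_ge0 ltW.
have c0 : 0 < c := lt_trans u0 uc.
split; rewrite ler_pM2r ?subr_gt0 // ler_pM2l ?(lt_le_trans ltr01 b1) //.
- apply: ge0_ler_powR; [done | by rewrite nnegrE ltW | by rewrite nnegrE ltW |].
  exact: le_trans pu (ltW uc).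
- have cq : c <= q := le_trans (ltW cv) vq.
  apply: ge0_ler_powR; [done | by rewrite nnegrE ltW | |done].
  by rewrite nnegrE (le_trans (ltW c0) cq).
Qed.

Lemma ratio_bound (alpha P Q rho e tau : R) : 0 < P -> P <= Q -> Q <= rho * P -> 1 <= rho ->
  0 <= e -> e <= alpha -> rho `^ alpha <= tau -> Q `^ e <= tau * P `^ e.
Proof.
move=> P0 PQ QrP r1 e0 ea rt.
have r0 : 0 <= rho by apply: le_trans r1; exact: ler01.
apply: (@le_trans _ _ ((rho * P) `^ e)).
  apply: ge0_ler_powR => //; rewrite nnegrE; [exact: le_trans (ltW P0) PQ | exact: mulr_ge0 (ltW P0)].
rewrite powRM //; last exact: ltW.
have h1 : rho `^ e <= tau by apply: le_trans rt; exact: ler_powR.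
have h2 := powR_ge0 P e.
nra.
Qed.

End Analysis.


Section Core.
Set Implicit Arguments. Unset Strict Implicit.
Variable R : realType.

Lemma cont_pow (beta x : R) : 0 < x -> {for x, continuous (fun z : R => z `^ beta)}.
Proof.
move=> x0; apply: differentiable_continuous; apply/derivable1_diffP.
by apply: derivable_powR; rewrite in_itv /= andbT.
Qed.

Lemma compact_img (K : set R) (f : R -> R) : compact K ->
  (forall x, K x -> {for x, continuous f}) -> compact (f @` K).
Proof.
move=> cK H; apply: continuous_compact => //; apply: continuous_in_subspaceT => x.
by rewrite inE => Kx; apply: H.
Qed.

Lemma solve (K1 K2 : set R) p1 q1 p2 q2 tau beta u :
  compact K1 -> compact K2 -> sep K1 p1 q1 tau -> sep K2 p2 q2 tau ->
  K1 p1 -> K1 q1 -> K2 p2 -> K2 q2 -> 0 < p1 -> 0 < p2 -> 0 < tau -> 1 <= beta ->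
  q1 `^ (beta - 1) <= tau * p1 `^ (beta - 1) -> q2 `^ (beta - 1) <= tau * p2 `^ (beta - 1) ->
  p1 `^ beta + q2 `^ beta < u -> q1 `^ beta + p2 `^ beta < u -> u < q1 `^ beta + q2 `^ beta ->
  exists x y, [/\ K1 x, K2 y & x `^ beta + y `^ beta = u].
Proof.
move=> cK1 cK2 s1 s2 K1p K1q K2p K2q p10 p20 tau0 b1 rt1 rt2 h1 h2 h3.
have [s11 _ _ _] := s1; have [s21 _ _ _] := s2.
have pq1 : p1 <= q1 by have /andP[] := s11 q1 K1q.
have pq2 : p2 <= q2 by have /andP[] := s21 q2 K2q.
have b0 : 0 < beta by apply: lt_le_trans b1; exact: ltr01.
have be0 : 0 <= beta - 1 by rewrite subr_ge0.
pose m1 := beta * p1 `^ (beta - 1); pose M1 := beta * q1 `^ (beta - 1).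
pose m2 := beta * p2 `^ (beta - 1); pose M2 := beta * q2 `^ (beta - 1).
have m10 : 0 < m1 by apply: mulr_gt0 => //; apply: powR_gt0.
have m20 : 0 < m2 by apply: mulr_gt0 => //; apply: powR_gt0.
have mM1 : m1 <= M1.
  rewrite ler_pM2l //; apply: ge0_ler_powR => //; rewrite nnegrE ltW //.
  exact: lt_le_trans p10 pq1.
have mM2 : m2 <= M2.
  rewrite ler_pM2l //; apply: ge0_ler_powR => //; rewrite nnegrE ltW //.
  exact: lt_le_trans p20 pq2.
have M10 : 0 < M1 := lt_le_trans m10 mM1.
have M20 : 0 < M2 := lt_le_trans m20 mM2.
have sA := sep_inc s1 tau0 m10 mM1 (pow_lip (q:=q1) p10 b1).
have sB0 := sep_inc s2 tau0 m20 mM2 (pow_lip (q:=q2) p20 b1).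
have sB1 := sep_neg sB0.
have t20 : 0 < tau * m2 / M2 by apply: divr_gt0 => //; apply: mulr_gt0.
have lipu : forall a b : R, - q2 `^ beta <= a -> a < b -> b <= - p2 `^ beta ->
    1 * (b - a) <= (b + u) - (a + u) /\ (b + u) - (a + u) <= 1 * (b - a).
  by move=> a b _ _ _; split; lra.
have sB := sep_inc (phi := fun z => z + u) sB1 t20 ltr01 (lexx _) lipu.
rewrite mulr1 divr1 in sB.
pose A := (fun z : R => z `^ beta) @` K1.
pose B0 := (fun z : R => z `^ beta) @` K2.
pose B1 := (fun z : R => - z) @` B0.
pose B := (fun z : R => z + u) @` B1.
have cA : compact A.
  apply: compact_img => // x K1x; apply: cont_pow.
  by have /andP[px _] := s11 x K1x; exact: lt_le_trans p10 px.
have cB0 : compact B0.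
  apply: compact_img => // x K2x; apply: cont_pow.
  by have /andP[px _] := s21 x K2x; exact: lt_le_trans p20 px.
have cB1 : compact B1 by apply: compact_img => // x _; exact: opp_continuous.
have cB : compact B.
  apply: compact_img => // x _; apply: continuousD; [exact: cvg_id | exact: cvg_cst].
have t1g : 1 <= tau * m1 / M1.
  by rewrite ler_pdivlMr // mul1r /m1 /M1 mulrCA ler_pM2l.
have t2g : 1 <= tau * m2 / M2.
  by rewrite ler_pdivlMr // mul1r /m2 /M2 mulrCA ler_pM2l.
have t10 : 0 < tau * m1 / M1 := lt_le_trans ltr01 t1g.
have tt : 1 <= tau * m1 / M1 * (tau * m2 / M2).
  by rewrite -[1]mulr1; apply: ler_pM => //; exact: ler01.
have [x [[x1 K1x1 ex] [w [z [y1 K2y1 ez] ew] e2]]] :=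
  gap_lemma (K1 := A) (K2 := B) cA cB sA sB (ex_intro2 _ _ p1 K1p erefl) (ex_intro2 _ _ q1 K1q erefl)
    (ex_intro2 _ _ (- q2 `^ beta) (ex_intro2 _ _ (q2 `^ beta) (ex_intro2 _ _ q2 K2q erefl) erefl) erefl)
    (ex_intro2 _ _ (- p2 `^ beta) (ex_intro2 _ _ (p2 `^ beta) (ex_intro2 _ _ p2 K2p erefl) erefl) erefl)
    t10 t20 tt ltac:(lra) ltac:(lra) ltac:(lra).
exists x1, y1; split => //.
subst; lra.
Qed.

End Core.


Section Core2.
Set Implicit Arguments. Unset Strict Implicit.
Variable R : realType.

Lemma core (K1 K2 : set R) p1 q1 p2 q2 tau alpha rho :
  compact K1 -> compact K2 -> sep K1 p1 q1 tau -> sep K2 p2 q2 tau ->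
  K1 p1 -> K1 q1 -> K2 p2 -> K2 q2 -> 0 < p1 -> p1 < q1 -> 0 < p2 -> p2 < q2 ->
  1 < tau -> 1 < alpha ->
  1 <= rho -> rho `^ alpha <= tau -> q1 <= rho * p1 -> q2 <= rho * p2 ->
  exists delta r1 r2, [/\ 0 < delta, delta < alpha, 0 < r1 & r1 < r2] /\
   forall beta r, alpha - delta < beta < alpha + delta -> r1 < r < r2 ->
     exists x y, [/\ K1 x, K2 y & x `^ beta + y `^ beta = r `^ beta].
Proof.
move=> cK1 cK2 s1 s2 K1p K1q K2p K2q p10 pq1 p20 pq2 tau1 a1 rho1 rt qr1 qr2.
have a0 : 0 < alpha by lra.
have q10 : 0 < q1 by lra.
have q20 : 0 < q2 by lra.
have lt1 : p1 `^ alpha < q1 `^ alpha by apply: gt0_ltr_powR; rewrite ?nnegrE ?ltW.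
have lt2 : p2 `^ alpha < q2 `^ alpha by apply: gt0_ltr_powR; rewrite ?nnegrE ?ltW.
pose L1 := p1 `^ alpha + q2 `^ alpha; pose L2 := q1 `^ alpha + p2 `^ alpha.
pose U := q1 `^ alpha + q2 `^ alpha.
pose Lm := Num.max L1 L2.
have LU : Lm < U by rewrite /Lm gt_max /L1 /L2 /U; apply/andP; split; lra.
have L1m : L1 <= Lm by rewrite le_max lexx.
have L2m : L2 <= Lm by rewrite le_max lexx orbT.
have L10 : 0 <= L1 by apply: addr_ge0; apply: powR_ge0.
pose w1 := Lm + (U - Lm) / 3; pose w2 := Lm + (U - Lm) * 2 / 3.
have w1a : Lm < w1 by rewrite /w1; lra.
have w12 : w1 < w2 by rewrite /w1 /w2; lra.
have w2U : w2 < U by rewrite /w2; lra.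
have w10 : 0 < w1 by lra.
have w20 : 0 < w2 by lra.
pose r1 := w1 `^ alpha^-1; pose r2 := w2 `^ alpha^-1.
have ai0 : 0 < alpha^-1 by rewrite invr_gt0.
have r1a : r1 `^ alpha = w1 by rewrite /r1 -powRrM mulVf ?gt_eqF // powRr1 // ltW.
have r2a : r2 `^ alpha = w2 by rewrite /r2 -powRrM mulVf ?gt_eqF // powRr1 // ltW.
have r10 : 0 < r1 by apply: powR_gt0.
have r12 : r1 < r2 by apply: gt0_ltr_powR; rewrite ?nnegrE ?ltW.
have r20 : 0 < r2 := lt_trans r10 r12.
pose h1 b := r1 `^ b - p1 `^ b - q2 `^ b.
pose h2 b := r1 `^ b - q1 `^ b - p2 `^ b.
pose h3 b := q1 `^ b + q2 `^ b - r2 `^ b.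
have ch1 : continuous h1.
  move=> x; apply: (@continuousB _ _ _ (fun b => r1 `^ b - p1 `^ b) (fun b => q2 `^ b));
    last exact: powRr_cont.
  by apply: (@continuousB _ _ _ (fun b => r1 `^ b) (fun b => p1 `^ b)); exact: powRr_cont.
have ch2 : continuous h2.
  move=> x; apply: (@continuousB _ _ _ (fun b => r1 `^ b - q1 `^ b) (fun b => p2 `^ b));
    last exact: powRr_cont.
  by apply: (@continuousB _ _ _ (fun b => r1 `^ b) (fun b => q1 `^ b)); exact: powRr_cont.
have ch3 : continuous h3.
  move=> x; apply: (@continuousB _ _ _ (fun b => q1 `^ b + q2 `^ b) (fun b => r2 `^ b));
    last exact: powRr_cont.
  by apply: (@continuousD _ _ _ (fun b => q1 `^ b) (fun b => q2 `^ b)); exact: powRr_cont.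
have hp1 : 0 < h1 alpha.
  by rewrite /h1 r1a -addrA -opprD subr_gt0; exact: le_lt_trans L1m w1a.
have [d1 d10 H1] := cont_pos ch1 hp1.
have hp2 : 0 < h2 alpha.
  by rewrite /h2 r1a -addrA -opprD subr_gt0; exact: le_lt_trans L2m w1a.
have [d2 d20 H2] := cont_pos ch2 hp2.
have hp3 : 0 < h3 alpha.
  by rewrite /h3 r2a subr_gt0.
have [d3 d30 H3] := cont_pos ch3 hp3.
pose delta := Num.min (Num.min d1 (Num.min d2 d3)) (Num.min (alpha - 1) 1).
have dd1 : delta <= d1 by rewrite /delta !ge_min lexx.
have dd2 : delta <= d2 by rewrite /delta !ge_min lexx !orbT.
have dd3 : delta <= d3 by rewrite /delta !ge_min lexx !orbT.
have dda : delta <= alpha - 1 by rewrite /delta !ge_min lexx !orbT.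
have dd4 : delta <= 1 by rewrite /delta !ge_min lexx !orbT.
have d0 : 0 < delta by rewrite /delta !lt_min d10 d20 d30 ltr01 subr_gt0 a1.
clearbody delta.
exists delta, r1, r2; split; first split => //; first by clear - dda; lra.
move=> beta r /andP[ab1 ab2] /andP[rr1 rr2].
have nb : `|alpha - beta| < delta by rewrite ltr_norml; apply/andP; split; clear - ab1 ab2; lra.
have b1 : 1 <= beta by clear - ab1 dda; lra.
have b0 : 0 < beta by clear - b1; lra.
have hb1 := H1 beta (lt_le_trans nb dd1).
have hb2 := H2 beta (lt_le_trans nb dd2).
have hb3 := H3 beta (lt_le_trans nb dd3).
have r0 : 0 < r := lt_trans r10 rr1.
have e1 : r1 `^ beta < r `^ beta by apply: gt0_ltr_powR; rewrite ?nnegrE ?ltW.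
have e2 : r `^ beta < r2 `^ beta by apply: gt0_ltr_powR; rewrite ?nnegrE ?ltW.
have rb1 : 0 <= beta - 1 by clear - b1; lra.
have rb2 : beta - 1 <= alpha by clear - ab2 dd4; lra.
apply: (solve cK1 cK2 s1 s2 K1p K1q K2p K2q p10 p20 _ b1).
- clear - tau1; lra.
- exact: (ratio_bound p10 (ltW pq1) qr1 rho1 rb1 rb2 rt).
- exact: (ratio_bound p20 (ltW pq2) qr2 rho1 rb1 rb2 rt).
- move: hb1 e1; rewrite /h1; clear; lra.
- move: hb2 e1; rewrite /h2; clear; lra.
- move: hb3 e2; rewrite /h3; clear; lra.
Qed.

End Core2.


Unset Implicit Arguments. Set Strict Implicit.

Lemma trans_window (R : realType) (K : set R) p q s tau :
  compact K -> sep K p q tau -> K p -> K q -> 0 < tau ->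
  [/\ compact ((fun x => x - s) @` K), sep ((fun x => x - s) @` K) (p - s) (q - s) tau,
      ((fun x => x - s) @` K) (p - s) & ((fun x => x - s) @` K) (q - s)].
Proof.
move=> cK sK Kp Kq t0; split.
- apply: compact_img => // x _; apply: continuousB; [exact: cvg_id | exact: cvg_cst].
- have lip : forall a b : R, p <= a -> a < b -> b <= q ->
    1 * (b - a) <= (b - s) - (a - s) /\ (b - s) - (a - s) <= 1 * (b - a).
    by move=> a b _ _ _; split; lra.
  have := sep_inc (phi := fun x => x - s) sK t0 ltr01 (lexx _) lip.
  by rewrite mulr1 divr1.
- by exists p.
- by exists q.
Qed.

Theorem mainTheorem5 (R : realType) (C : set R) (alpha : R) :
  is_cantor_set C -> 1 < thickness C -> 1 < alpha ->
  forall t : R * R,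
    (pinned_dist_set alpha C t)° !=set0 /\
    exists delta : R, 0 < delta < alpha /\
      (\bigcap_(beta in [set b : R | alpha - delta < b < alpha + delta])
          pinned_dist_set beta C t)° !=set0.
Proof.
move=> cC t1 a1 t.
set tau := thickness C.
have tau0 : 0 < tau by apply: lt_trans t1; exact: ltr01.
have a0 : 0 < alpha by apply: lt_trans a1; exact: ltr01.
have ai0 : 0 < alpha^-1 by rewrite invr_gt0.
pose rho := tau `^ alpha^-1.
have rho1 : 1 < rho.
  have := @gt0_ltr_powR R _ ai0 1 tau; rewrite !nnegrE ler01 ltW // => /(_ isT isT t1).
  by rewrite powR1.
have rhoa : rho `^ alpha = tau by rewrite /rho -powRrM mulVf ?gt_eqF // powRr1 // ltW.
have [K1 [p1 [q1 [s1 [[cK1 sK1 K1p K1q pq1] [sp1 rq1 back1]]]]]] := window t.1 cC t1 rho1.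
have [K2 [p2 [q2 [s2 [[cK2 sK2 K2p K2q pq2] [sp2 rq2 back2]]]]]] := window t.2 cC t1 rho1.
have [cK1' sK1' K1p' K1q'] := trans_window _ _ _ _ s1 _ cK1 sK1 K1p K1q tau0.
have [cK2' sK2' K2p' K2q'] := trans_window _ _ _ _ s2 _ cK2 sK2 K2p K2q tau0.
have rhoa' : rho `^ alpha <= tau by rewrite rhoa.
have f1 : 0 < p1 - s1 by rewrite subr_gt0.
have f2 : 0 < p2 - s2 by rewrite subr_gt0.
have f3 : p1 - s1 < q1 - s1 by rewrite ltrD2r.
have f4 : p2 - s2 < q2 - s2 by rewrite ltrD2r.
have [delta [r1 [r2 [[d0 da r10 r12] H]]]] :=
  core cK1' cK2' sK1' sK2' K1p' K1q' K2p' K2q' f1 f3 f2 f4 t1 a1 (ltW rho1) rhoa' rq1 rq2.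
pose I := [set r | r1 < r < r2].
have inI : forall beta, alpha - delta < beta < alpha + delta -> I `<=` pinned_dist_set beta C t.
  move=> beta hb r hr.
  have [x [y [[x0 K1x0 ex] [y0 K2y0 ey] exy]]] := H beta r hb hr.
  have [c1 [Cc1 ec1]] := back1 x0 K1x0.
  have [c2 [Cc2 ec2]] := back2 y0 K2y0.
  have b0 : 0 < beta by case/andP: hb => hb1 _; apply: le_lt_trans hb1; rewrite subr_ge0 ltW.
  have r0 : 0 <= r by case/andP: hr => hr1 _; exact: ltW (lt_trans r10 hr1).
  exists (c1, c2); first by split.
  rewrite /beta_norm /= ec1 ec2 ex ey exy -powRrM mulfV ?gt_eqF //.
  exact: powRr1.
have intI : forall S, I `<=` S -> S° !=set0.
  move=> S IS; exists ((r1 + r2) / 2); rewrite /interior /=.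
  apply/nbhs_ballP; exists ((r2 - r1) / 2) => /=; first by rewrite divr_gt0 // subr_gt0.
  move=> z; rewrite /ball /= => hz; apply: IS; rewrite /I /=.
  have := ler_norm ((r1 + r2) / 2 - z); have := ler_norm (- ((r1 + r2) / 2 - z)).
  rewrite normrN => n1 n2; apply/andP; split; clear - hz n1 n2; lra.
split.
- apply: intI; apply: inI.
  by rewrite ltrBlDr ltrDl d0.
- exists delta; split; first by rewrite d0 da.
  apply: intI => r Ir beta hb; exact: inI hb r Ir.
Qed.
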